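(* Let $\lambda>0$ and let $\mathbf r_\lambda(t)$, $t\ge0$, be the uniformly rotating planar trajectory generated by a minimizer of $f+\lambda g$ (see context), regarded as a motion in $\mathbb R^3$ lying in the plane $z=0$, with velocities $\mathbf v(t)=\dot{\mathbf r}_\lambda(t)$. Let $\mathbf L=\mathbf L(\mathbf r_\lambda(t),\mathbf v(t))$ and $T=T(\mathbf v(t))$ (both constant in $t$), and assume $\mathbf L\ne0$, $T>0$. Then for every $t\ge0$ the state $(\mathbf r_\lambda(t),\mathbf v(t))$ minimizes $g(\mathbf r)$ over all $(\mathbf r,\mathbf v)\in\Omega$ with $\mathbf L(\mathbf r,\mathbf v)=\mathbf L$ and $T(\mathbf v)=T$.
   Context: Fix $N\ge2$, masses $m_i>0$, $\gamma>0$. Planar configuration space $\mathfrak R=\{\mathbf r\in(\mathbb R^2)^N:\ \mathbf r_i\neq\mathbf r_j \text{ for } i\neq j\}$; $f(\mathbf r)=\sum_{i<j}\frac{\gamma m_im_j}{|\mathbf r_j-\mathbf r_i|}$, $g(\mathbf r)=\sum_i m_i|\mathbf r_i|^2$. For a minimizer $\mathbf r_\lambda=(\mathbf r_{1\lambda},\dots,\mathbf r_{N\lambda})$ of $f+\lambda g$ on $\mathfrak R$, with $\mathbf r_{i\lambda}=|\mathbf r_{i\lambda}|(\cos\varphi_{i\lambda},\sin\varphi_{i\lambda})$ and $\omega=\sqrt{2\lambda}$, set $\mathbf r_{i\lambda}(t)=|\mathbf r_{i\lambda}|(\cos(\varphi_{i\lambda}+\omega t),\sin(\varphi_{i\lambda}+\omega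 t))$. Three-dimensional phase space $\Omega=\mathfrak R_3\times(\mathbb R^3)^N$, $\mathfrak R_3=\{\mathbf r\in(\mathbb R^3)^N:\mathbf r_i\ne\mathbf r_j,\ i\ne j\}$; $\mathbf L(\mathbf r,\mathbf v)=\sum_im_i\mathbf r_i\times\mathbf v_i$, $T(\mathbf v)=\frac12\sum_im_i|\mathbf v_i|^2$, $g(\mathbf r)=\sum_im_i|\mathbf r_i|^2$. *)

(* Defs.v *)
From Stdlib Require Import Reals List.
From Coquelicot Require Import Coquelicot.
Open Scope R_scope.

Definition sumN (N : nat) (F : nat -> R) : R :=
  fold_right Rplus 0 (map F (seq 0 N)).

Definition norm2 (p : R * R) : R := sqrt (fst p ^ 2 + snd p ^ 2).

Definition in_config2 (N : nat) (r : nat -> R * R) : Prop :=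
  forall i j, (i < N)%nat -> (j < N)%nat -> i <> j -> r i <> r j.

Definition f_pot (N : nat) (m : nat -> R) (gamma : R) (r : nat -> R * R) : R :=
  sumN N (fun i => sumN N (fun j =>
    if Nat.ltb i j then
      gamma * m i * m j /
        norm2 (fst (r j) - fst (r i), snd (r j) - snd (r i))
    else 0)).

Definition g2 (N : nat) (m : nat -> R) (r : nat -> R * R) : R :=
  sumN N (fun i => m i * (norm2 (r i)) ^ 2).

Definition is_minimizer (N : nat) (m : nat -> R) (gamma lambda : R)
    (r : nat -> R * R) : Prop :=
  in_config2 N r /\
  forall r', in_config2 N r' ->
    f_pot N m gamma r + lambda * g2 N m r <= f_pot N m gamma r' + lambda * g2 N m r'.

Record V3 := mkV3 { vx : R; vy : R; vz : R }.

Definition cross (a b : V3) : V3 :=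
  mkV3 (vy a * vz b - vz a * vy b)
       (vz a * vx b - vx a * vz b)
       (vx a * vy b - vy a * vx b).

Definition sqnorm3 (a : V3) : R := vx a ^ 2 + vy a ^ 2 + vz a ^ 2.

Definition V3zero : V3 := mkV3 0 0 0.

(* configuration space \mathfrak R_3; Omega = \mathfrak R_3 x (R^3)^N *)
Definition in_config3 (N : nat) (r : nat -> V3) : Prop :=
  forall i j, (i < N)%nat -> (j < N)%nat -> i <> j -> r i <> r j.

Definition angmom (N : nat) (m : nat -> R) (r v : nat -> V3) : V3 :=
  mkV3 (sumN N (fun i => m i * vx (cross (r i) (v i))))
       (sumN N (fun i => m i * vy (cross (r i) (v i))))
       (sumN N (fun i => m i * vz (cross (r i) (v i)))).

Definition kin (N : nat) (m : nat -> R) (v : nat -> V3) : R :=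
  / 2 * sumN N (fun i => m i * sqnorm3 (v i)).

Definition g3 (N : nat) (m : nat -> R) (r : nat -> V3) : R :=
  sumN N (fun i => m i * sqnorm3 (r i)).

(* r0 : the minimizer, phi : its polar angles, omega = sqrt (2 lambda) *)
Definition rot_traj (lambda : R) (r0 : nat -> R * R) (phi : nat -> R)
    (t : R) : nat -> V3 :=
  fun i => mkV3 (norm2 (r0 i) * cos (phi i + sqrt (2 * lambda) * t))
                (norm2 (r0 i) * sin (phi i + sqrt (2 * lambda) * t))
                0.

Definition traj_vel (x : R -> nat -> V3) (t : R) : nat -> V3 :=
  fun i => mkV3 (Derive (fun s => vx (x s i)) t)
                (Derive (fun s => vy (x s i)) t)
                (Derive (fun s => vz (x s i)) t).

(* Main.v *)
Require Import Defs.
From Stdlib Require Import Reals List Lra Psatz.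
From Coquelicot Require Import Coquelicot.
Open Scope R_scope.

Lemma fr_ext (l : list nat) (F G : nat -> R) :
  (forall i, In i l -> F i = G i) ->
  fold_right Rplus 0 (map F l) = fold_right Rplus 0 (map G l).
Proof. induction l; simpl; intros H; auto. rewrite H, IHl; auto. Qed.

Lemma fr_le (l : list nat) (F G : nat -> R) :
  (forall i, In i l -> F i <= G i) ->
  fold_right Rplus 0 (map F l) <= fold_right Rplus 0 (map G l).
Proof. induction l; simpl; intros H; [lra|]. 
  apply Rplus_le_compat; auto. Qed.

Lemma fr_plus (l : list nat) (F G : nat -> R) :
  fold_right Rplus 0 (map (fun i => F i + G i) l) =
  fold_right Rplus 0 (map F l) + fold_right Rplus 0 (map G l).
Proof. induction l; simpl; [ring|]. rewrite IHl; ring. Qed.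

Lemma fr_scal (l : list nat) c (F : nat -> R) :
  fold_right Rplus 0 (map (fun i => c * F i) l) =
  c * fold_right Rplus 0 (map F l).
Proof. induction l; simpl; [ring|]. rewrite IHl; ring. Qed.

Lemma sumN_ext N F G : (forall i, (i < N)%nat -> F i = G i) -> sumN N F = sumN N G.
Proof. intros H; apply fr_ext; intros i Hi; apply in_seq in Hi; apply H; lia. Qed.
Lemma sumN_le N F G : (forall i, (i < N)%nat -> F i <= G i) -> sumN N F <= sumN N G.
Proof. intros H; apply fr_le; intros i Hi; apply in_seq in Hi; apply H; lia. Qed.
Lemma sumN_plus N F G : sumN N (fun i => F i + G i) = sumN N F + sumN N G.
Proof. apply fr_plus. Qed.
Lemma sumN_scal N c F : sumN N (fun i => c * F i) = c * sumN N F.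
Proof. apply fr_scal. Qed.

Lemma vel_eq lambda r0 phi t i :
  traj_vel (rot_traj lambda r0 phi) t i =
  mkV3 (- norm2 (r0 i) * sqrt (2*lambda) * sin (phi i + sqrt (2 * lambda) * t))
       (norm2 (r0 i) * sqrt (2*lambda) * cos (phi i + sqrt (2 * lambda) * t)) 0.
Proof.
  unfold traj_vel, rot_traj; simpl. f_equal.
  - apply is_derive_unique; auto_derive; auto; ring.
  - apply is_derive_unique; auto_derive; auto; ring.
  - apply Derive_const.
Qed.

Theorem theorem10p2
  (N : nat) (hN : (2 <= N)%nat)
  (m : nat -> R) (hm : forall i, (i < N)%nat -> 0 < m i)
  (gamma : R) (hgamma : 0 < gamma)
  (lambda : R) (hlambda : 0 < lambda)
  (r0 : nat -> R * R) (hmin : is_minimizer N m gamma lambda r0)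
  (phi : nat -> R)
  (hphi : forall i, (i < N)%nat ->
     r0 i = (norm2 (r0 i) * cos (phi i), norm2 (r0 i) * sin (phi i))) :
  let x := rot_traj lambda r0 phi in
  let L := angmom N m (x 0) (traj_vel x 0) in
  let T := kin N m (traj_vel x 0) in
  L <> V3zero -> 0 < T ->
  forall t, 0 <= t ->
    in_config3 N (x t) /\
    angmom N m (x t) (traj_vel x t) = L /\
    kin N m (traj_vel x t) = T /\
    (forall r v : nat -> V3, in_config3 N r ->
       angmom N m r v = L -> kin N m v = T ->
       g3 N m (x t) <= g3 N m r).
Proof.
  intros x L T _ _ t _.
  set (w := sqrt (2 * lambda)).
  assert (hw : 0 < w) by (apply sqrt_lt_R0; lra).
  set (G := sumN N (fun i => m i * norm2 (r0 i) ^ 2)).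
  assert (Ham : forall s, angmom N m (x s) (traj_vel x s) = mkV3 0 0 (w * G)).
  { intros s. unfold angmom. f_equal.
      transitivity (sumN N (fun i => 0 * m i)).
      + apply sumN_ext; intros i _. unfold x; rewrite vel_eq. unfold rot_traj, cross; simpl. ring.
      + rewrite sumN_scal; ring.
    - transitivity (sumN N (fun i => 0 * m i)).
      + apply sumN_ext; intros i _. unfold x; rewrite vel_eq. unfold rot_traj, cross; simpl. ring.
      + rewrite sumN_scal; ring.
    - unfold G; rewrite <- sumN_scal. apply sumN_ext; intros i _.
      unfold x; rewrite vel_eq. unfold rot_traj, cross; simpl. fold w.
      pose proof (sin2_cos2 (phi i + w * s)) as K. unfold Rsqr in K.
      transitivity (w * (m i * norm2 (r0 i) ^ 2) * (sin (phi i + w * s) * sin (phi i + w * s) + cos (phi i + w * s) * cos (phi i + w * s))); [ring|]. rewrite K; ring. }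
  assert (Hkin : forall s, kin N m (traj_vel x s) = / 2 * (w^2 * G)).
  { intros s. unfold kin. f_equal. unfold G; rewrite <- sumN_scal. apply sumN_ext; intros i _.
    unfold x; rewrite vel_eq. unfold sqnorm3; simpl. fold w.
    pose proof (sin2_cos2 (phi i + w * s)) as K. unfold Rsqr in K.
      transitivity (w^2 * (m i * norm2 (r0 i) ^ 2) * (sin (phi i + w * s) * sin (phi i + w * s) + cos (phi i + w * s) * cos (phi i + w * s))); [ring|]. rewrite K; ring. }
  assert (Hg : g3 N m (x t) = G).
  { unfold g3, G. apply sumN_ext; intros i _. unfold x, rot_traj, sqnorm3; simpl.
    pose proof (sin2_cos2 (phi i + w * t)) as K. unfold Rsqr in K. fold w.
      transitivity ((m i * norm2 (r0 i) ^ 2) * (sin (phi i + w * t) * sin (phi i + w * t) + cos (phi i + w * t) * cos (phi i + w * t))); [ring|]. rewrite K; ring. }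
  split; [|split; [|split]].
  - intros i j Hi Hj Hij Heq. destruct hmin as [Hc _].
    apply (Hc i j Hi Hj Hij). rewrite (hphi i Hi), (hphi j Hj).
    unfold x, rot_traj in Heq. fold w in Heq. injection Heq as H1 H2.
    replace (phi i) with ((phi i + w * t) - w * t) by ring.
    replace (phi j) with ((phi j + w * t) - w * t) by ring.
    rewrite !cos_minus, !sin_minus. f_equal.
    + transitivity (norm2 (r0 i) * cos (phi i + w * t) * cos (w*t) +
                    norm2 (r0 i) * sin (phi i + w * t) * sin (w*t)); [ring|].
      rewrite H1, H2; ring.
    + transitivity (norm2 (r0 i) * sin (phi i + w * t) * cos (w*t) -
                    norm2 (r0 i) * cos (phi i + w * t) * sin (w*t)); [ring|].
      rewrite H1, H2; ring.
  - unfold L; rewrite !Ham; reflexivity.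
  - unfold T; rewrite !Hkin; reflexivity.
  - intros r v _ HL HT. rewrite Hg.
    unfold L in HL; rewrite Ham in HL. unfold T in HT; rewrite Hkin in HT.
    unfold angmom in HL. injection HL as _ _ HLz.
    unfold kin in HT.
    assert (HS : sumN N (fun i => m i * sqnorm3 (v i)) = w^2 * G) by lra.
    assert (Hineq : sumN N (fun i => m i * vz (cross (r i) (v i))) <=
       sumN N (fun i => w / 2 * (m i * sqnorm3 (r i)) + / (2 * w) * (m i * sqnorm3 (v i)))).
    { apply sumN_le; intros i Hi. pose proof (hm i Hi).
      unfold cross, sqnorm3; simpl.
      destruct (r i) as [a b c]; destruct (v i) as [d e f]; simpl.
      assert (K : w / 2 * (a^2+b^2+c^2) + / (2*w) * (d^2+e^2+f^2) - (a*e - b*d) >= 0).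
      { replace (w / 2 * (a^2+b^2+c^2) + / (2*w) * (d^2+e^2+f^2) - (a*e - b*d)) with
          (/ (2*w) * ((w*a - e)^2 + (w*b + d)^2 + (w*c)^2 + f^2)) by (field; lra).
        apply Rle_ge, Rmult_le_pos. left; apply Rinv_0_lt_compat; lra.
        pose proof (pow2_ge_0 (w*a-e)); pose proof (pow2_ge_0 (w*b+d));
        pose proof (pow2_ge_0 (w*c)); pose proof (pow2_ge_0 f); lra. }
      assert (K2 : 0 <= m i * (w / 2 * (a^2+b^2+c^2) + / (2*w) * (d^2+e^2+f^2) - (a*e - b*d))).
      { apply Rmult_le_pos; lra. }
      replace (a ^ 2 + b ^ 2 + c ^ 2) with (a^2+b^2+c^2) by ring.
      simpl in K2 |- *. lra. }
    rewrite sumN_plus, !sumN_scal, HS in Hineq. unfold cross in Hineq, HLz; simpl in Hineq, HLz. rewrite HLz in Hineq. fold (g3 N m r) in Hineq.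
    replace (/ (2 * w) * (w ^ 2 * G)) with (w * G / 2) in Hineq by (field; lra).
    apply (Rmult_le_reg_l w); [exact hw|]. assert (E : / (2 * w) * (w * (w * 1) * G) = w * G / 2) by (field; lra). lra.
Qed.
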